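(* Let $G$ be a (claw, bull)-free graph with $\alpha(G)\ge 3$ and $\mathrm{diam}(G)=2$. Then $\ell(G)\ge 6$.
   Context: A claw is a graph isomorphic to $K_{1,3}$; a bull is the graph obtained from a triangle by adding two pendant edges at two different vertices. A graph is (claw, bull)-free if it has no induced claw and no induced bull. $\alpha(G)$ is the independence number of $G$, $\mathrm{diam}(G)$ its diameter, and $\ell(G)$ the length of a longest induced cycle in $G$. *)

(* Defs.v *)
From mathcomp Require Import all_boot.
Set Implicit Arguments. Unset Strict Implicit. Unset Printing Implicit Defensive.

Section Graphs.
Variable T : finType.
Variable e : rel T.

Definition simple_graph := symmetric e /\ irreflexive e.

Definition has_induced (n : nat) (h : rel 'I_n) :=
  exists f : 'I_n -> T, injective f /\ forall i j, e (f i) (f j) = h i j.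

Definition stable (S : {set T}) := [forall x in S, forall y in S, ~~ e x y].
Definition alpha : nat := \max_(S : {set T} | stable S) #|S|.

Definition walk (k : nat) (x y : T) :=
  exists p : seq T, [/\ size p = k, path e x p & last x p = y].
Definition dist_le (k : nat) (x y : T) := exists2 m, m <= k & walk m x y.
Definition diam_eq (d : nat) :=
  (forall x y, dist_le d x y) /\ ~ (forall x y, dist_le d.-1 x y).

Definition cycle_rel (k : nat) : rel 'I_k :=
  fun i j => (val j == (val i).+1 %% k) || (val i == (val j).+1 %% k).
(* boolean version of has_induced, needed to take a max over k *)
Definition has_inducedb (n : nat) (h : rel 'I_n) : bool :=
  [exists f : {ffun 'I_n -> T},
     injectiveb f && [forall i, forall j, e (f i) (f j) == h i j]].
Definition has_induced_cycle (k : nat) : bool :=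
  (3 <= k) && has_inducedb (cycle_rel (k:=k)).
(* length of a longest induced cycle (0 if there is none) *)
Definition longest_induced_cycle : nat :=
  \max_(k < #|T|.+1 | has_induced_cycle k) k.

End Graphs.

Definition claw_rel : rel 'I_4 :=
  fun i j => ((val i == 0) && (val j != 0)) || ((val j == 0) && (val i != 0)).

(* bull: triangle 0 1 2, pendant 3 at 0, pendant 4 at 1 *)
Definition bull_edge (a b : nat) :=
  [|| (a == 0) && (b == 1), (a == 0) && (b == 2), (a == 1) && (b == 2),
      (a == 0) && (b == 3) | (a == 1) && (b == 4)].
Definition bull_rel : rel 'I_5 :=
  fun i j => bull_edge (val i) (val j) || bull_edge (val j) (val i).

(* Main.v *)
Require Import Defs.
From mathcomp Require Import all_boot.
Set Implicit Arguments. Unset Strict Implicit.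

Lemma induced_seq (T : finType) (e : rel T) n (h : rel 'I_n) (s : seq T) x0 :
  size s = n -> uniq s ->
  (forall i j : 'I_n, e (nth x0 s i) (nth x0 s j) = h i j) -> has_induced e h.
Proof.
move=> Hs Hu He; exists (fun i => nth x0 s i); split=> //.
move=> i j /eqP; rewrite nth_uniq ?Hs ?ltn_ord // => /eqP; apply: val_inj.
Qed.

Lemma adj_neq (T : finType) (e : rel T) : irreflexive e ->
  forall u v, e u v -> u != v.
Proof. by move=> irr u v; apply: contraTneq => ->; rewrite irr. Qed.

Lemma wit_neq (T : finType) (e : rel T) w u v : e w u -> ~~ e w v -> u != v.
Proof. by move=> H; apply: contraNneq => <-. Qed.

Ltac se sym irr := solve [ assumption | apply/negbTE; assumption | apply: irr
  | rewrite sym; assumption | rewrite sym; apply/negbTE; assumption ].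

Ltac neq e sym irr := match goal with
| |- is_true (?u != ?v) => first [ assumption | rewrite eq_sym; assumption
  | apply: (adj_neq irr); first [assumption | rewrite sym; assumption]
  | rewrite eq_sym; apply: (adj_neq irr); first [assumption | rewrite sym; assumption]
  | match goal with H : is_true (e ?w u) |- _ => apply: (wit_neq (w:=w)); [exact H | se sym irr] end
  | match goal with H : is_true (e u ?w) |- _ => apply: (wit_neq (w:=w)); [rewrite sym; exact H | se sym irr] end
  | match goal with H : is_true (e ?w v) |- _ => rewrite eq_sym; apply: (wit_neq (w:=w)); [exact H | se sym irr] end
  | match goal with H : is_true (e v ?w) |- _ => rewrite eq_sym; apply: (wit_neq (w:=w)); [rewrite sym; exact H | se sym irr] end ]
end.

Ltac uq e sym irr := rewrite /= !inE !negb_or; repeat (apply/andP; split); try done; neq e sym irr.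

Lemma claw_of (T : finType) (e : rel T) : symmetric e -> irreflexive e ->
  forall x a b c, e x a -> e x b -> e x c -> ~~ e a b -> ~~ e b c -> ~~ e a c ->
  a != b -> b != c -> a != c -> has_induced e claw_rel.
Proof.
move=> sym irr x a b c xa xb xc ab bc ac nab nbc nac.
apply: (@induced_seq _ _ _ _ [:: x; a; b; c] x) => //.
  uq e sym irr.
case=> [[|[|[|[|i]]]] Hi] //; case=> [[|[|[|[|j]]]] Hj] //; rewrite /claw_rel /=;
  se sym irr.
Qed.

Lemma bull_of (T : finType) (e : rel T) : symmetric e -> irreflexive e ->
  forall a b c x y, e a x -> e x b -> e b y -> e y c -> ~~ e x c -> ~~ e y a ->
  ~~ e a b -> ~~ e b c -> ~~ e a c -> e x y -> has_induced e bull_rel.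
Proof.
move=> sym irr a b c x y ax xb bY yc xc ya ab bc ac xy.
have xa : e x a by rewrite sym.
have yb : e y b by rewrite sym.
have ca : ~~ e c a by rewrite sym.
have cb : ~~ e c b by rewrite sym.
have ba : ~~ e b a by rewrite sym.
apply: (@induced_seq _ _ _ _ [:: x; y; b; a; c] x) => //.
  uq e sym irr.
case=> [[|[|[|[|[|i]]]]] Hi] //; case=> [[|[|[|[|[|j]]]]] Hj] //;
  rewrite /bull_rel /bull_edge /=; se sym irr.
Qed.

Lemma c6_of (T : finType) (e : rel T) : symmetric e -> irreflexive e ->
  forall a b c x y z, e a x -> e x b -> e b y -> e y c -> e c z -> e z a ->
  ~~ e x c -> ~~ e y a -> ~~ e z b -> ~~ e x y -> ~~ e y z -> ~~ e z x ->
  ~~ e a b -> ~~ e b c -> ~~ e a c -> has_induced e (cycle_rel (k:=6)).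
Proof.
move=> sym irr a b c x y z ax xb bY yc cz za xc ya zb xy yz zx ab bc ac.
have xa : e x a by rewrite sym.
have yb : e y b by rewrite sym.
have zc : e z c by rewrite sym.
have ca : ~~ e c a by rewrite sym.
have cb : ~~ e c b by rewrite sym.
have ba : ~~ e b a by rewrite sym.
have bz : ~~ e b z by rewrite sym.
have ay : ~~ e a y by rewrite sym.
have cx : ~~ e c x by rewrite sym.
apply: (@induced_seq _ _ _ _ [:: a; x; b; y; c; z] x) => //.
  uq e sym irr.
case=> [[|[|[|[|[|[|i]]]]]] Hi] //; case=> [[|[|[|[|[|[|j]]]]]] Hj] //;
  rewrite /cycle_rel /=; se sym irr.
Qed.

Lemma cn (T : finType) (e : rel T) u v : u != v -> ~~ e u v -> dist_le e 2 u v ->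
  exists w, e u w && e w v.
Proof.
move=> nuv neuv [m hm [p [sz pa la]]].
case: p sz pa la => [|p1 [|p2 [|p3 p]]] /= sz.
- by move=> _ E; rewrite E eqxx in nuv.
- by rewrite andbT => H E; rewrite -E H in neuv.
- by move=> /andP [H1 /andP [H2 _]] E; exists p1; rewrite H1 -E H2.
- by rewrite -sz in hm.
Qed.

Theorem lemma6 (T : finType) (e : rel T) :
  simple_graph e ->
  ~ has_induced e claw_rel ->
  ~ has_induced e bull_rel ->
  3 <= alpha e ->
  diam_eq e 2 ->
  6 <= longest_induced_cycle e.
Proof.
move=> [sym irr] noclaw nobull Ha [Hd _].
case: (boolP [exists S : {set T}, stable e S && (2 < #|S|)]); last first.
  move=> H; exfalso; move: Ha; rewrite leqNgt => /negP; apply; rewrite ltnS.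
  apply/bigmax_leqP => S stS; rewrite leqNgt; apply/negP => c.
  by move/negP: H; apply; apply/existsP; exists S; rewrite stS c.
move=> /existsP [S /andP [stS /card_gt2P [a [b [c [[aS bS cS] [nab nbc nca]]]]]]].
have st u v : u \in S -> v \in S -> ~~ e u v.
  by move=> uS vS; move/forallP/(_ u)/implyP/(_ uS)/forallP/(_ v)/implyP/(_ vS): stS.
have ab := st _ _ aS bS; have bc := st _ _ bS cS; have ca := st _ _ cS aS.
have ac : ~~ e a c by rewrite sym.
have nac : a != c by rewrite eq_sym.
have [x /andP [ax xb]] := cn nab ab (Hd a b).
have [y /andP [bY yc]] := cn nbc bc (Hd b c).
have [z /andP [cz za]] := cn nca ca (Hd c a).
have xc : ~~ e x c.
  apply/negP => H; apply noclaw; apply: (@claw_of _ _ sym irr x a b c) => //;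
  by (rewrite sym || rewrite eq_sym).
have ya : ~~ e y a.
  apply/negP => H; apply noclaw; apply: (@claw_of _ _ sym irr y b c a) => //;
  by (rewrite sym || rewrite eq_sym).
have zb : ~~ e z b.
  apply/negP => H; apply noclaw; apply: (@claw_of _ _ sym irr z c a b) => //;
  by (rewrite sym || rewrite eq_sym).
have xy : ~~ e x y.
  apply/negP => H; apply nobull; apply: (@bull_of _ _ sym irr a b c x y) => //;
  by (rewrite sym || rewrite eq_sym).
have yz : ~~ e y z.
  apply/negP => H; apply nobull; apply: (@bull_of _ _ sym irr b c a y z) => //;
  by (rewrite sym || rewrite eq_sym).
have zx : ~~ e z x.
  apply/negP => H; apply nobull; apply: (@bull_of _ _ sym irr c a b z x) => //;
  by (rewrite sym || rewrite eq_sym).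
have [f [finj fe]] := @c6_of _ _ sym irr a b c x y z ax xb bY yc cz za xc ya zb xy yz zx ab bc ac.
have h6 : 6 < #|T|.+1 by rewrite ltnS; have := leq_card f finj; rewrite card_ord.
apply: (@leq_bigmax_cond _ _ (fun k : 'I_#|T|.+1 => val k) (Ordinal h6)).
rewrite /has_induced_cycle /=; apply/existsP; exists (finfun f).
apply/andP; split.
  by apply/injectiveP => i j; rewrite !ffunE; apply: finj.
by apply/forallP => i; apply/forallP => j; rewrite !ffunE fe.
Qed.
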